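(* For every integer $m\ge3$, $6$ divides $P_m(3)$.
   Context: The Ducci function $D:\mathbb{Z}_m^3\to\mathbb{Z}_m^3$ is $D(x_1,x_2,x_3)=(x_1+x_2,\,x_2+x_3,\,x_3+x_1)$, entries mod $m$. The period $\mathrm{Per}(\mathbf{u})$ is the smallest $k\ge1$ such that $D^{l+k}(\mathbf{u})=D^l(\mathbf{u})$ for some $l\ge0$, and $P_m(3)=\mathrm{Per}(0,0,1)$. *)

(* Defs.v *)
From mathcomp Require Import all_boot all_order all_algebra.
Set Implicit Arguments. Unset Strict Implicit. Unset Printing Implicit Defensive.
Import GRing.Theory.
Local Open Scope ring_scope.

(* Points of Z_m^3 (meaningful for 1 < m). *)
Definition trip (m : nat) := ('Z_m * 'Z_m * 'Z_m)%type.

Definition ducci (m : nat) (u : trip m) : trip m :=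
  let: (x1, x2, x3) := u in (x1 + x2, x2 + x3, x3 + x1).

Definition eventually_periodic_with (m : nat) (u : trip m) (k : nat) : Prop :=
  exists l : nat, iter (l + k) (@ducci m) u = iter l (@ducci m) u.

Definition is_Per (m : nat) (u : trip m) (k : nat) : Prop :=
  (0 < k)%N /\ eventually_periodic_with u k /\
  (forall k' : nat, (0 < k')%N -> eventually_periodic_with u k' -> (k <= k')%N).

Definition e3 (m : nat) : trip m := (0, 0, 1).

(* Main.v *)
Require Import Defs.
From mathcomp Require Import all_boot all_order all_algebra.
From Stdlib Require Import Classical.
From mathcomp Require Import ring zify.
Set Implicit Arguments. Unset Strict Implicit.
Import GRing.Theory.

Lemma ex_min_P (P : nat -> Prop) n : P n -> exists k, P k /\ forall k', P k' -> (k <= k')%N.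
Proof.
elim/ltn_ind: n => n IH Pn.
case: (classic (exists k', P k' /\ (k' < n)%N)) => [[k' [Pk' lt]]|H].
  exact: IH k' lt Pk'.
exists n; split=> // k' Pk'; rewrite leqNgt; apply/negP => lt; apply: H; eauto.
Qed.

Section S.
Variable m : nat.
Local Open Scope ring_scope.

Definition diffs (x : trip m) : 'Z_m * 'Z_m := let: (a, b, c) := x in (b - a, c - b).
Definition T (d : 'Z_m * 'Z_m) : 'Z_m * 'Z_m := (d.1 + d.2, - d.1).

Lemma diffs_ducci x : diffs (ducci x) = T (diffs x).
Proof.
case: x => [[a b] c] /=; rewrite /T /=; congr pair.
  ring.
ring.
Qed.

Lemma diffs_iter n x : diffs (iter n (@ducci m) x) = iter n T (diffs x).
Proof. by elim: n => //= n IH; rewrite diffs_ducci IH. Qed.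

Lemma T6 d : iter 6 T d = d.
Proof.
case: d => a b; rewrite /T /=; congr pair; ring.
Qed.

Lemma diffs_e3 : diffs (e3 m) = (0, 1). Proof. by rewrite /diffs /e3 !subr0. Qed.

Lemma Tit1 : iter 1 T (0, 1) = (1, 0). Proof. rewrite /T /=; congr pair; ring. Qed.
Lemma Tit2 : iter 2 T (0, 1) = (1, -1). Proof. rewrite /T /=; congr pair; ring. Qed.
Lemma Tit3 : iter 3 T (0, 1) = (0, -1). Proof. rewrite /T /=; congr pair; ring. Qed.
Lemma Tit4 : iter 4 T (0, 1) = (-1, 0). Proof. rewrite /T /=; congr pair; ring. Qed.
Lemma Tit5 : iter 5 T (0, 1) = (-1, 1). Proof. rewrite /T /=; congr pair; ring. Qed.

End S.

Lemma T_inj m : injective (@T m).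
Proof. case=> a b [c d]; rewrite /T /= => e.
have e1 := congr1 fst e; have e2 := congr1 snd e; rewrite /= in e1 e2.
have ea : a = c by exact: (oppr_inj e2).
by rewrite ea in e1 *; rewrite (addrI c e1).
Qed.

Lemma iterT_inj m l : injective (iter l (@T m)).
Proof. elim: l => //= l IH x y /T_inj; exact: IH. Qed.

Lemma iterT6 m q d : iter (q * 6) (@T m) d = d.
Proof. elim: q => // q IH; by rewrite mulSn iterD IH T6. Qed.

Lemma key n k l : iter (l + k) (@ducci n.+3) (e3 n.+3) = iter l (@ducci n.+3) (e3 n.+3) -> (6 %| k)%N.
Proof.
move/(congr1 (@diffs _)); rewrite !diffs_iter iterD => /iterT_inj.
rewrite (divn_eq k 6) iterD iterT6.
have : (k %% 6 < 6)%N by rewrite ltn_pmod.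
have h10 : (1%R : 'Z_(n.+3)) != 0%R by rewrite oner_eq0.
have hm0 : ((- 1)%R : 'Z_(n.+3)) != 0%R by rewrite oppr_eq0 oner_eq0.
have hm1 : ((- 1)%R : 'Z_(n.+3)) != 1%R.
  apply/eqP => /(congr1 val) /=; rewrite /Zp_trunc /=.
  rewrite (modn_small (m:=1)) // subn1 /= (modn_small (m:=n.+2)) // (modn_small (m:=1)) //.
rewrite /dvdn; case: (k %% 6) => [|[|[|[|[|[|r]]]]]] // _.
all: rewrite diffs_e3 modnMDl //.
- by rewrite (Tit2 (n.+3)) => /(congr1 snd) /= /eqP; rewrite (negbTE hm1).
- by rewrite (Tit3 (n.+3)) => /(congr1 snd) /= /eqP; rewrite (negbTE hm1).
- by rewrite (Tit4 (n.+3)) => /(congr1 snd) /= /eqP; rewrite eq_sym (negbTE h10).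
- by rewrite (Tit5 (n.+3)) => /(congr1 fst) /= /eqP; rewrite (negbTE hm0).
Qed.

Lemma exists_period (m : nat) : exists k, (0 < k)%N /\ eventually_periodic_with (e3 m) k.
Proof.
pose N := #|{: trip m}|.
pose f := fun i : 'I_N.+1 => iter i (@ducci m) (e3 m).
have [/existsP [i /existsP [j /andP [lij /eqP eij]]] | H] :=
  boolP [exists i : 'I_N.+1, exists j : 'I_N.+1, (i < j)%N && (f i == f j)].
  exists (j - i)%N; split; first by rewrite subn_gt0.
  exists i; rewrite subnKC ?(ltnW lij) //.
exfalso.
have inj : injective f.
  move=> i j eij; apply/val_inj => /=.
  case: (ltngtP i j) => // lt; move/negP: H; case; apply/existsP.
    by exists i; apply/existsP; exists j; rewrite lt eij eqxx.
  by exists j; apply/existsP; exists i; rewrite lt eij eqxx.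
by have := leq_card f inj; rewrite card_ord ltnn.
Qed.

Theorem theorem3p5 (m : nat) (hm : (3 <= m)%N) :
  exists k : nat, is_Per (e3 m) k /\ (6 %| k)%N.
Proof.
have [k0 Pk0] := exists_period m.
have [k [[k_gt0 Hk] Hmin]] := @ex_min_P (fun k => (0 < k)%N /\ eventually_periodic_with (e3 m) k) k0 Pk0.
exists k; split.
  split=> //; split=> // k' k'gt0 Hk'; exact: Hmin.
move: hm Hk; case: m {k0 Pk0 Hmin} => [|[|[|n]]] // _ [l Hl].
exact: key Hl.
Qed.
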